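(* Let $\gamma\in\mathbb{R}$, $\lambda>0$, $\Delta>0$, let $\nu$ be a finite measure on $\mathbb{R}$ with $\nu(\mathbb{R})=\lambda$, $F:=\nu/\lambda$, and let $P$ and $\mathcal{F}^{-1}[\varphi^{-1}(-\cdot)]$ be as in the context. Let $f_1,f_2$ be bounded functions. Then $$\int_{\mathbb{R}}\big(f_1*\mathcal{F}^{-1}[\varphi^{-1}(-\cdot)](x)\big)\big(f_2*\mathcal{F}^{-1}[\varphi^{-1}(-\cdot)](x)\big)P(dx)$$ $$=f_1(0)f_2(0)+\Delta\Big(\int_{\mathbb{R}}f_1f_2\,d\nu-f_1(0)\,(f_2*\bar\nu)(0)-f_2(0)\,(f_1*\bar\nu)(0)+\lambda f_1(0)f_2(0)\Big)+O((\lambda\Delta)^2).$$ In particular, if $f_1(0)=f_2(0)=0$, the left-hand side equals $\lambda\Delta\int_{\mathbb{R}}f_1(x)f_2(x)F(dx)+O((\lambda\Delta)^2)$.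
   Context: $\bar\nu(A):=\nu(-A)$ for Borel $A$, $\nu^{*k}$ and $\bar\nu^{*k}$ are $k$-fold convolutions with $\nu^{*0}=\bar\nu^{*0}=\delta_0$. $P:=e^{-\lambda\Delta}\delta_{\gamma\Delta}*\sum_{k\ge0}\nu^{*k}\Delta^k/k!$ (the law of $X_\Delta$ for the compound Poisson process with drift $\gamma$, intensity $\lambda$ and jump law $F$), $\varphi=\mathcal{F}P$ with $\mathcal{F}\mu(u)=\int e^{iux}\mu(dx)$, i.e. $\varphi(u)=\exp(\Delta(i\gamma u+\mathcal{F}\nu(u)-\lambda))$, and $\mathcal{F}^{-1}[\varphi^{-1}(-\cdot)]:=e^{\lambda\Delta}\delta_{\gamma\Delta}*\sum_{k\ge0}\bar\nu^{*k}(-\Delta)^k/k!$, a finite signed measure whose Fourier transform is $u\mapsto1/\varphi(-u)$. For a bounded function $f$ and finite (signed) measure $\mu$, $f*\mu(x):=\int f(x-y)\mu(dy)$. *)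

(* Defs.v *)
From HB Require Import structures.
From mathcomp Require Import all_boot all_order all_algebra.
From mathcomp Require Import all_classical all_reals all_analysis.
Set Implicit Arguments. Unset Strict Implicit. Unset Printing Implicit Defensive.
Import Order.TTheory GRing.Theory Num.Theory.
Import numFieldNormedType.Exports.
Local Open Scope classical_set_scope.
Local Open Scope ring_scope.

Section defs.
Variable R : realType.

(* [convpow nu k g] = \int g d(nu^{*k}), the integral of g against the k-fold
   convolution power of nu (nu^{*0} = delta_0), unfolded as an iterated
   integral:  \int g d nu^{*(k+1)} = \int nu(dy) \int g(y + s) nu^{*k}(ds). *)
Fixpoint convpow (nu : {measure set R -> \bar R}) (k : nat) (g : R -> R) : R :=
  match k with
  | 0%N => g 0
  | k'.+1 => \int[nu]_y convpow nu k' (fun s => g (y + s))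
  end.

(* \int g d(nubar^{*k}), where nubar(A) = nu(-A). *)
Definition convpow_bar (nu : {measure set R -> \bar R}) (k : nat) (g : R -> R) : R :=
  convpow nu k (fun s => g (- s)).

Definition rseries (a : nat -> R) : R := limn (series a).

(* \int h dP, P = e^{-lam Del} delta_{gam Del} * sum_k nu^{*k} Del^k/k!  *)
Definition P_int (gam lam Del : R) (nu : {measure set R -> \bar R}) (h : R -> R) : R :=
  expR (- (lam * Del)) *
  rseries (fun k => Del ^+ k / (k`!)%:R * convpow nu k (fun s => h (gam * Del + s))).

(* \int h dG, G = F^{-1}[phi^{-1}(-.)]
     = e^{lam Del} delta_{gam Del} * sum_k nubar^{*k} (-Del)^k/k!  *)
Definition Ginv_int (gam lam Del : R) (nu : {measure set R -> \bar R}) (h : R -> R) : R :=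
  expR (lam * Del) *
  rseries (fun k => (- Del) ^+ k / (k`!)%:R * convpow_bar nu k (fun s => h (gam * Del + s))).

(* f * mu (x) = \int f(x - y) mu(dy), the (signed) measure mu being given
   through its integration functional [I]. *)
Definition fconv (f : R -> R) (I : (R -> R) -> R) (x : R) : R :=
  I (fun y => f (x - y)).


End defs.

(* Main.v *)
Require Import Defs.
From HB Require Import structures.
From mathcomp Require Import all_boot all_order all_algebra.
From mathcomp Require Import all_classical all_reals all_analysis.
From mathcomp Require Import measure lebesgue_measure measurable_realfun lebesgue_integral kernel.
From mathcomp Require Import ring lra.
Import Order.TTheory GRing.Theory Num.Theory.
Import numFieldNormedType.Exports.
Local Open Scope classical_set_scope.
Local Open Scope ring_scope.

Section Ser.
Variable R : realType.
Implicit Types (a : nat -> R) (x B : R).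

Lemma exp_coeff_shift x m k : 0 <= x -> (m <= k)%N ->
  exp_coeff x k <= x ^+ m * exp_coeff x (k - m)%N.
Proof.
move=> x0 mk; rewrite /exp_coeff /= -{1}(subnKC mk) exprD -mulrA.
apply: ler_wpM2l; first exact: exprn_ge0.
apply: ler_wpM2l; first exact: exprn_ge0.
rewrite lef_pV2 ?posrE ?ltr0n ?fact_gt0//.
by rewrite ler_nat leq_fact// leq_subr.
Qed.

Lemma series_exp_le x n : 0 <= x -> series (exp_coeff x) n <= expR x.
Proof.
move=> x0; apply: (nondecreasing_cvgn_le _ (is_cvg_series_exp_coeff x)).
by apply: nondecreasing_series => k _ _; exact: exp_coeff_ge0.
Qed.

Lemma ser_tail {a B x} m n : 0 <= x -> (forall k, `|a k| <= B * exp_coeff x k) ->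
  (m <= n)%N -> `|series a n - series a m| <= B * x ^+ m * expR x.
Proof.
move=> x0 ha mn; rewrite sub_series_geq//.
apply: (le_trans (ler_norm_sum _ _ _)).
have B0 : 0 <= B.
  have := ha 0%N; rewrite /exp_coeff /= expr0 fact0 divr1 mulr1 => h.
  exact: le_trans (normr_ge0 _) h.
apply: le_trans; first by apply: ler_sum => k _; exact: ha.
apply: (@le_trans _ _ (\sum_(m <= k < n) B * (x ^+ m * exp_coeff x (k - m)%N))).
  apply: ler_sum_nat => k /andP[mk _].
  by apply: ler_wpM2l => //; exact: exp_coeff_shift.
rewrite -big_distrr /= -mulrA; apply: ler_wpM2l => //.
rewrite -big_distrr /=; apply: ler_wpM2l; first exact: exprn_ge0.
rewrite -{1}(add0n m) big_addn.
under eq_bigr do rewrite addnK.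
exact: series_exp_le.
Qed.

Lemma ser_cvg {a B x} : 0 <= x -> (forall k, `|a k| <= B * exp_coeff x k) ->
  cvgn (series a).
Proof.
move=> x0 ha; apply: normed_cvg.
apply: (@series_le_cvg _ _ (fun k => B * exp_coeff x k)).
- by move=> n; exact: normr_ge0.
- by move=> n; exact: le_trans (normr_ge0 _) (ha n).
- exact: ha.
- exact: (@is_cvg_seriesZ _ _ B (is_cvg_series_exp_coeff x)).
Qed.

Lemma ser_bound {a B x} m : 0 <= x -> (forall k, `|a k| <= B * exp_coeff x k) ->
  `|rseries a - series a m| <= B * x ^+ m * expR x.
Proof.
move=> x0 ha; have ca := ser_cvg x0 ha.
rewrite ler_distl; apply/andP; split.
- apply: limr_ge => //; near=> n.
  have : (m <= n)%N by near: n; exists m.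
  by move=> /(ser_tail m n x0 ha); rewrite ler_distl => /andP[].
- apply: limr_le => //; near=> n.
  have : (m <= n)%N by near: n; exists m.
  by move=> /(ser_tail m n x0 ha); rewrite ler_distl => /andP[].
Unshelve. all: by end_near.
Qed.

Lemma series2 a : series a 2 = a 0%N + a 1%N.
Proof. by rewrite /series /= big_nat_recr //= big_nat1. Qed.
Lemma series1 a : series a 1 = a 0%N.
Proof. by rewrite /series /= big_nat1. Qed.
Lemma series0 a : series a 0 = 0.
Proof. by rewrite /series /= big_geq. Qed.

Lemma exp_bounds x : 0 <= x ->
  `|expR x - 1| <= x * expR x /\ `|expR x - (1 + x)| <= x ^+ 2 * expR x.
Proof.
move=> x0.
have ha : forall k, `|exp_coeff x k| <= 1 * exp_coeff x k.
  by move=> k; rewrite mul1r ger0_norm//; exact: exp_coeff_ge0.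
have e0 : exp_coeff x 0 = 1 by rewrite /exp_coeff /= expr0 divr1.
have e1 : exp_coeff x 1 = x by rewrite /exp_coeff /= expr1 divr1.
split.
- by have := ser_bound 1 x0 ha; rewrite series1 e0 mul1r expr1.
- by have := ser_bound 2 x0 ha; rewrite series2 e0 e1 mul1r.
Qed.
End Ser.

Section Alg.
Variable R : realType.

Lemma nmul {a b A B : R} : `|a| <= A -> `|b| <= B -> `|a * b| <= A * B.
Proof. by move=> ha hb; rewrite normrM; apply: ler_pM. Qed.

Lemma prod_err (a a' b b' al be ga de : R) : `|a - a'| <= al -> `|b| <= be ->
  `|a'| <= ga -> `|b - b'| <= de -> `|a * b - a' * b'| <= al * be + ga * de.
Proof.
move=> h1 h2 h3 h4.
have -> : a * b - a' * b' = (a - a') * b + a' * (b - b') by ring.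
by apply: le_trans (ler_normD _ _) _; apply: lerD; apply: nmul.
Qed.

Definition Pol (e : R) := e ^+ 5 + 2 * e ^+ 4 + e ^+ 3 + 2 * e ^+ 2 + 5 * e.

Lemma Pol_mono e E : 0 <= e -> e <= E -> Pol e <= Pol E.
Proof.
move=> e0 eE; have E0 : 0 <= E by exact: le_trans eE.
have hX n : e ^+ n <= E ^+ n by apply: lerXn2r.
rewrite /Pol; repeat apply: lerD => //; by apply: ler_wpM2l.
Qed.

Lemma final_alg (e x lam Del M1 M2 u1 u2 J1 J2 I12 G1 G2 K S : R) :
  0 <= M1 -> 0 <= M2 -> x = lam * Del -> 0 <= lam -> 0 <= Del -> x <= 1 -> 1 <= e ->
  `|e - 1| <= x * e -> `|e - (1 + x)| <= x ^+ 2 * e ->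
  `|u1| <= M1 -> `|u2| <= M2 -> `|J1| <= M1 * lam -> `|J2| <= M2 * lam ->
  `|I12| <= M1 * M2 * lam ->
  `|G1 - e * (u1 - Del * J1)| <= e * (M1 * x ^+ 2 * e) ->
  `|G2 - e * (u2 - Del * J2)| <= e * (M2 * x ^+ 2 * e) ->
  `|G2| <= e * (M2 * e) ->
  `|K - e ^+ 2 * I12| <= ((e * (M1 * x * e)) * (e * (M2 * e)) + (e * M1) * (e * (M2 * x * e))) * lam ->
  `|S - (G1 * G2 + Del * K)| <= (e * (M1 * e)) * (e * (M2 * e)) * x ^+ 2 * e ->
  `|e^-1 * S - (u1 * u2 + Del * (I12 - u1 * J2 - u2 * J1 + lam * u1 * u2))|
     <= Pol e * M1 * M2 * x ^+ 2.
Proof.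
move=> M10 M20 xE l0 D0 x1 e1 he1 he2 hu1 hu2 hJ1 hJ2 hI hG1 hG2 hG2b hK hS.
have e0 : 0 < e by exact: lt_le_trans e1.
have ene0 : e != 0 by rewrite gt_eqF.
have x0 : 0 <= x by rewrite xE mulr_ge0.
have ei1 : `|e^-1| <= 1.
  by rewrite ger0_norm ?invf_le1// invr_ge0 ltW.
have hw1 : `|Del * J1| <= M1 * x.
  rewrite normrM ger0_norm// xE (mulrC lam) mulrCA; exact: ler_wpM2l.
have hw2 : `|Del * J2| <= M2 * x.
  rewrite normrM ger0_norm// xE (mulrC lam) mulrCA; exact: ler_wpM2l.
have hD : `|Del * I12| <= M1 * M2 * x.
  rewrite normrM ger0_norm// xE (mulrC lam) mulrCA; exact: ler_wpM2l.
have hU1 : `|u1 - Del * J1| <= 2 * M1.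
  apply: le_trans (ler_normB _ _) _.
  have : M1 * x <= M1 by rewrite ler_piMr.
  lra.
have -> : e^-1 * S - (u1 * u2 + Del * (I12 - u1 * J2 - u2 * J1 + lam * u1 * u2)) =
   e^-1 * (S - (G1 * G2 + Del * K))
 + e^-1 * ((G1 - e * (u1 - Del * J1)) * G2)
 + (u1 - Del * J1) * (G2 - e * (u2 - Del * J2))
 + e^-1 * (Del * (K - e ^+ 2 * I12))
 + (e - (1 + x)) * (u1 * u2)
 - (e - 1) * (u1 * (Del * J2) + u2 * (Del * J1))
 + e * ((Del * J1) * (Del * J2))
 + (e - 1) * (Del * I12).
  by rewrite xE; field.
have h1 := nmul ei1 hS.
have h2 := nmul ei1 (nmul hG1 hG2b).
have h3 := nmul hU1 hG2.
have h4 : `|e^-1 * (Del * (K - e ^+ 2 * I12))| <= 1 *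
   (((e * (M1 * x * e)) * (e * (M2 * e)) + (e * M1) * (e * (M2 * x * e))) * x).
  apply: nmul => //; rewrite normrM ger0_norm//.
  apply: le_trans; first exact: ler_wpM2l hK.
  by rewrite xE le_eqVlt; apply/orP; left; apply/eqP; ring.
have h5 : `|(e - (1 + x)) * (u1 * u2)| <= (x ^+ 2 * e) * (M1 * M2).
  by apply: nmul => //; apply: nmul.
have h6 : `|(e - 1) * (u1 * (Del * J2) + u2 * (Del * J1))| <=
    (x * e) * (M1 * (M2 * x) + M2 * (M1 * x)).
  apply: nmul => //; apply: le_trans (ler_normD _ _) _.
  by apply: lerD; apply: nmul.
have h7 : `|e * ((Del * J1) * (Del * J2))| <= e * ((M1 * x) * (M2 * x)).
  apply: nmul; first by rewrite ger0_norm // ltW.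
  exact: nmul hw1 hw2.
have h8 : `|(e - 1) * (Del * I12)| <= (x * e) * (M1 * M2 * x).
  exact: nmul.
apply: le_trans (ler_normD _ _) _.
apply: le_trans; first (apply: lerD; last exact: h8).
  apply: le_trans (ler_normD _ _) _.
  apply: lerD; last exact: h7.
  apply: le_trans (ler_normB _ _) _.
  apply: lerD; last exact: h6.
  apply: le_trans (ler_normD _ _) _.
  apply: lerD; last exact: h5.
  apply: le_trans (ler_normD _ _) _.
  apply: lerD; last exact: h4.
  apply: le_trans (ler_normD _ _) _.
  apply: lerD; last exact: h3.
  apply: le_trans (ler_normD _ _) _.
  apply: lerD; [exact: h1|exact: h2].
by rewrite /Pol le_eqVlt; apply/orP; left; apply/eqP; ring.
Qed.
End Alg.
Arguments Pol {R} e.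

Section Mes.
Context (R : realType) (nu : {measure set R -> \bar R}) (lam : R)
  (Hnu : nu setT = lam%:E).

Lemma lam_ge0 : 0 <= lam.
Proof. by rewrite -lee_fin -Hnu measure_ge0. Qed.

Lemma nu_fin : fin_num_fun nu.
Proof.
move=> U mU; rewrite ge0_fin_numE//.
apply: (@le_lt_trans _ _ (nu setT)); last by rewrite Hnu ltry.
by apply: le_measure => //; rewrite inE.
Qed.

Definition nuf : set R -> \bar R := nu.
HB.instance Definition _ := Measure.on nuf.
HB.instance Definition _ := Measure_isFinite.Build _ _ _ nuf nu_fin.

Lemma imeas d (T : measurableType d) (f : T * R -> \bar R) :
  measurable_fun setT f -> (forall x, (0 <= f x)%E) ->
  measurable_fun setT (fun t => (\int[nu]_y f (t, y))%E).
Proof.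
move=> mf f0.
have := @measurable_fun_fubini_tonelli_F _ _ T R R nuf f mf f0. exact.
Qed.

Lemma int_bd {g : R -> R} {M} : measurable_fun setT g -> (forall y, `|g y| <= M) ->
  nu.-integrable setT (EFin \o g).
Proof.
move=> mg hg; apply: measurable_bounded_integrable => //.
  by rewrite Hnu ltry.
exists M; split; first by rewrite num_real.
by move=> M' hM' y _ /=; exact: le_trans (hg y) (ltW hM').
Qed.

Lemma Rint_bd {g : R -> R} {M} : measurable_fun setT g -> (forall y, `|g y| <= M) ->
  `|\int[nu]_y g y| <= M * lam.
Proof.
move=> mg hg; have ig := int_bd mg hg.
apply: le_trans; first exact: le_normr_Rintegral.
have M0 : 0 <= M by exact: le_trans (normr_ge0 _) (hg 0).
apply: (@le_trans _ _ (\int[nu]_y M)).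
  apply: le_Rintegral => //.
    exact: integrable_norm.
  apply: (@int_bd _ M) => //; by move=> y; rewrite ger0_norm.
by rewrite Rintegral_cst// Hnu.
Qed.

Lemma Rint_meas d (T : measurableType d) (F : T * R -> R) M :
  measurable_fun setT F -> (forall p, `|F p| <= M) ->
  measurable_fun setT (fun t => \int[nu]_y F (t, y)).
Proof.
move=> mF hF.
have e : (fun t => \int[nu]_y F (t, y)) =
   (fun t => fine (\int[nu]_y ((F (t, y) + M)%:E))%E - M * lam).
  apply/funext => t.
  have M0 : 0 <= M by exact: le_trans (normr_ge0 _) (hF (t, 0)).
  have mFt : measurable_fun setT (fun y => F (t, y)) by exact: measurable_fun_pair2.
  have iF : nu.-integrable setT (EFin \o (fun y => F (t, y))).
    exact: (@int_bd _ M).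
  have iM : nu.-integrable setT (EFin \o (fun _ : R => M)).
    by apply: (@int_bd _ M) => // y; rewrite ger0_norm.
  rewrite -[fine _]/(\int[nu]_y (F (t, y) + M)).
  by rewrite RintegralD// Rintegral_cst// Hnu /= addrK.
have mA : measurable_fun setT
    (fun t => fine (\int[nu]_y ((F (t, y) + M)%:E))%E).
  apply: measurableT_comp; first exact: fine_measurable.
  apply: (@imeas _ _ (fun p => (F p + M)%:E)).
    apply/measurable_EFinP; exact: (measurable_funD mF (measurable_cst _)).
  move=> p; rewrite lee_fin.
  by have := hF p; rewrite ler_norml => /andP[h _]; rewrite -lerBlDr sub0r.
rewrite e; exact: (measurable_funB mA (measurable_cst _)).
Qed.

Lemma convpow_mb k : forall d (T : measurableType d) (F : T * R -> R) M,
  measurable_fun setT F -> (forall p, `|F p| <= M) ->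
  measurable_fun setT (fun t => convpow nu k (fun s => F (t, s))) /\
  (forall t, `|convpow nu k (fun s => F (t, s))| <= lam ^+ k * M).
Proof.
elim: k => [|k IH] d T F M mF hF.
  split; first exact: measurable_fun_pair1.
  by move=> t; rewrite expr0 mul1r; exact: hF.
pose G := fun q : (T * R) * R => F (q.1.1, q.1.2 + q.2).
have mG : measurable_fun setT G.
  apply: measurableT_comp => //; apply: measurable_fun_pair => /=.
    exact: measurableT_comp.
  apply: measurable_funD; last exact: measurable_snd.
  exact: measurableT_comp.
have [mH hH] := IH _ _ G M mG (fun q => hF _).
split.
  exact: (@Rint_meas _ _ (fun q => convpow nu k (fun s => G (q, s))) (lam ^+ k * M)).
move=> t /=.
have := @Rint_bd (fun y => convpow nu k (fun s => G ((t, y), s))) (lam ^+ k * M).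
rewrite exprS (mulrC lam) -mulrA (mulrC M) mulrA; apply.
  exact: (measurable_fun_pair2 (f := fun q => convpow nu k (fun s => G (q, s))) _ mH).
by move=> y; exact: hH.
Qed.

Lemma convpow_bd k (g : R -> R) M : measurable_fun setT g -> (forall s, `|g s| <= M) ->
  `|convpow nu k g| <= lam ^+ k * M.
Proof.
move=> mg hg.
have [_ ] := @convpow_mb k _ R (fun p => g p.2) M (measurableT_comp mg measurable_snd) (fun p => hg _).
by move=> /(_ 0).
Qed.

Section Gf.
Variables (gam Del : R) (f : R -> R) (M : R).
Hypothesis Del0 : 0 <= Del.
Hypothesis mf : measurable_fun setT f.
Hypothesis hf : forall y, `|f y| <= M.

Let c := gam * Del.
Let x := lam * Del.

Definition coefs (z : R) (k : nat) : R := (- Del) ^+ k / (k`!)%:R *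
  convpow_bar nu k (fun s => (fun y => f (z - y)) (gam * Del + s)).

Lemma mF : measurable_fun setT (fun p : R * R => f (p.1 - (c + - p.2))).
Proof.
exact: (measurableT_comp mf (measurable_funB measurable_fst
  (measurable_funD (measurable_cst c) (measurableT_comp (@oppr_measurable R setT) measurable_snd)))).
Qed.

Lemma coefs_bd z k : `|coefs z k| <= M * exp_coeff x k.
Proof.
rewrite /coefs normrM.
have [_ /(_ z) hb] := @convpow_mb k _ R _ M mF (fun p => hf _).
have e : `|(- Del) ^+ k / (k`!)%:R| = Del ^+ k / (k`!)%:R.
  by rewrite normrM normrX normrN (ger0_norm Del0) ger0_norm// invr_ge0.
rewrite e; apply: le_trans.
  apply: ler_wpM2l; last exact: hb.
  by rewrite divr_ge0// exprn_ge0.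
by rewrite /exp_coeff /= /x exprMn le_eqVlt; apply/orP; left; apply/eqP; ring.
Qed.

Lemma coefs0 z : coefs z 0 = f (z - c).
Proof.
by rewrite /coefs expr0 fact0 divr1 mul1r /convpow_bar /= oppr0 addr0.
Qed.

Lemma coefs1 z : coefs z 1 = - Del * \int[nu]_y f (z - c + y).
Proof.
have f1 : (1`!)%:R = 1 :> R by [].
rewrite /coefs expr1 f1 divr1 /convpow_bar /=; congr (_ * _).
by apply: eq_Rintegral => y _; rewrite addr0 opprD opprK addrA.
Qed.

Definition Gf z := fconv f (Ginv_int gam lam Del nu) z.

Lemma GfE z : Gf z = expR x * rseries (coefs z).
Proof. by []. Qed.

Lemma Gf_bd z m : `|Gf z - expR x * series (coefs z) m| <= expR x * (M * x ^+ m * expR x).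
Proof.
have x0 : 0 <= x by rewrite /x mulr_ge0// lam_ge0.
rewrite GfE -mulrBr normrM ger0_norm ?expR_ge0//.
apply: ler_wpM2l; first exact: expR_ge0.
exact: (ser_bound _ m x0 (coefs_bd z)).
Qed.

Lemma Gf_meas : measurable_fun setT Gf.
Proof.
have x0 : 0 <= x by rewrite /x mulr_ge0// lam_ge0.
have -> : Gf = (fun z => expR x * rseries (coefs z)) by [].
apply: (measurable_funM (measurable_cst _)).
apply: (@measurable_fun_cvg _ _ _ _ (fun n z => series (coefs z) n)).
  move=> n; rewrite /series /=.
  apply: measurable_sum => k.
  apply: (measurable_funM (measurable_cst _)).
  by have [] := @convpow_mb k _ R _ M mF (fun p => hf _).
move=> z _; exact: (ser_cvg _ x0 (coefs_bd z)).
Qed.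
End Gf.
End Mes.

Lemma bnd_ex (R : realType) (f : R -> R) : bounded_fun f -> exists M, forall y, `|f y| <= M.
Proof.
move=> [M [Mreal]] /(_ (`|M| + 1)).
rewrite (le_lt_trans (ler_norm _)) ?ltrDl// => /(_ erefl) aM.
by exists (`|M| + 1) => y; exact: aM.
Qed.

Theorem lemma2p2 (R : realType) (f1 f2 : R -> R) :
  measurable_fun setT f1 -> measurable_fun setT f2 ->
  bounded_fun f1 -> bounded_fun f2 ->
  exists C : R,
    forall (gam lam Del : R) (nu : {measure set R -> \bar R}),
      0 < lam -> 0 < Del -> nu setT = lam%:E -> lam * Del <= 1 ->
      let LHS := P_int gam lam Del nu
                   (fun x => fconv f1 (Ginv_int gam lam Del nu) x *
                             fconv f2 (Ginv_int gam lam Del nu) x) in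
      `| LHS - (f1 0 * f2 0
                + Del * (\int[nu]_x (f1 x * f2 x)
                         - f1 0 * fconv f2 (convpow_bar nu 1) 0
                         - f2 0 * fconv f1 (convpow_bar nu 1) 0
                         + lam * f1 0 * f2 0)) | <= C * (lam * Del) ^+ 2
      /\ (f1 0 = 0 -> f2 0 = 0 ->
          `| LHS - lam * Del * (lam^-1 * \int[nu]_x (f1 x * f2 x)) |
             <= C * (lam * Del) ^+ 2).
Proof.
move=> mf1 mf2 bf1 bf2.
have [M1 hM1] := bnd_ex _ _ bf1; have [M2 hM2] := bnd_ex _ _ bf2.
have M10 : 0 <= M1 by exact: le_trans (normr_ge0 _) (hM1 0).
have M20 : 0 <= M2 by exact: le_trans (normr_ge0 _) (hM2 0).
exists (Pol (expR (1 : R)) * M1 * M2).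
move=> gam lam Del nu hlam hDel Hnu hx LHS.
have D0 : 0 <= Del by exact: ltW.
have l0 : 0 <= lam by exact: ltW.
have x0 : 0 <= lam * Del by rewrite mulr_ge0.
have e1 : 1 <= expR (lam * Del) by have := expR_ge1Dx (lam * Del); lra.
have eE : expR (lam * Del) <= expR 1 by rewrite ler_expR.
have [he1 he2] := @exp_bounds _ _ x0.
pose c := gam * Del.
pose G1 := Gf R nu lam gam Del f1; pose G2 := Gf R nu lam gam Del f2.
have bG1 := @Gf_bd _ _ _ Hnu gam Del f1 M1 D0 mf1 hM1.
have bG2 := @Gf_bd _ _ _ Hnu gam Del f2 M2 D0 mf2 hM2.
have mG1 := @Gf_meas _ _ _ Hnu gam Del f1 M1 D0 mf1 hM1.
have mG2 := @Gf_meas _ _ _ Hnu gam Del f2 M2 D0 mf2 hM2.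
pose x := lam * Del.
pose e := expR x.
have G0 (f : R -> R) M z : `|Gf R nu lam gam Del f z - e * series (coefs R nu gam Del f z) 0| <=
   e * (M * x ^+ 0 * e) -> `|Gf R nu lam gam Del f z| <= e * (M * e).
  by rewrite series0 mulr0 subr0 expr0 mulr1.
have bH z : `|G1 z * G2 z| <= (e * (M1 * e)) * (e * (M2 * e)).
  by apply: nmul; apply: G0; [exact: bG1|exact: bG2].
have mH : measurable_fun setT (fun z => G1 z * G2 z) by exact: measurable_funM.
pose b k := Del ^+ k / (k`!)%:R * convpow nu k (fun s => (fun z => G1 z * G2 z) (gam * Del + s)).
have hb k : `|b k| <= (e * (M1 * e)) * (e * (M2 * e)) * exp_coeff x k.
  rewrite /b normrM.
  have := @convpow_bd _ _ _ Hnu k (fun s => G1 (gam * Del + s) * G2 (gam * Del + s))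
     ((e * (M1 * e)) * (e * (M2 * e))).
  move=> /(_ _ (fun s => bH _)) hc.
  have mc : measurable_fun setT (fun s => G1 (gam * Del + s) * G2 (gam * Del + s)).
    have mg : measurable_fun setT (fun s : R => gam * Del + s).
      by apply: measurable_funD.
    exact: (measurableT_comp mH mg).
  have {}hc := hc mc.
  rewrite (ger0_norm (_ : 0 <= Del ^+ k / (k`!)%:R)); last by rewrite divr_ge0// exprn_ge0.
  apply: le_trans; first by apply: ler_wpM2l; [rewrite divr_ge0// exprn_ge0|exact: hc].
  by rewrite /exp_coeff /= /x exprMn le_eqVlt; apply/orP; left; apply/eqP; ring.
have hS := ser_bound _ 2 x0 hb.
have b0 : b 0%N = G1 (gam * Del + 0) * G2 (gam * Del + 0).
  by rewrite /b expr0 fact0 divr1 mul1r.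
have b1 : b 1%N = Del * \int[nu]_y (G1 (gam * Del + (y + 0)) * G2 (gam * Del + (y + 0))).
  by rewrite /b expr1 (_ : (1`!)%:R = 1 :> R)// divr1.
rewrite series2 b0 b1 in hS.
pose J1 := \int[nu]_y f1 y; pose J2 := \int[nu]_y f2 y.
pose I12 := \int[nu]_y (f1 y * f2 y).
have eJ (f : R -> R) : \int[nu]_y f (gam * Del + 0 - gam * Del + y) = \int[nu]_y f y.
  by apply: eq_Rintegral => y _; rewrite addr0 subrr add0r.
have c00 : gam * Del + 0 - gam * Del = 0 by rewrite addr0 subrr.
have hGc1 : `|G1 (gam * Del + 0) - e * (f1 0 - Del * J1)| <= e * (M1 * x ^+ 2 * e).
  have := bG1 (gam * Del + 0) 2.
  by rewrite series2 coefs0 coefs1 eJ c00 mulNr.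
have hGc2 : `|G2 (gam * Del + 0) - e * (f2 0 - Del * J2)| <= e * (M2 * x ^+ 2 * e).
  have := bG2 (gam * Del + 0) 2.
  by rewrite series2 coefs0 coefs1 eJ c00 mulNr.
have hGc2b : `|G2 (gam * Del + 0)| <= e * (M2 * e) by apply: G0; exact: bG2.
have cy y : gam * Del + (y + 0) - gam * Del = y by rewrite addr0 (addrC (gam * Del) y) addrK.
have hGy1 y : `|G1 (gam * Del + (y + 0)) - e * f1 y| <= e * (M1 * x * e).
  by have := bG1 (gam * Del + (y + 0)) 1; rewrite series1 coefs0 cy expr1.
have hGy2 y : `|G2 (gam * Del + (y + 0)) - e * f2 y| <= e * (M2 * x * e).
  by have := bG2 (gam * Del + (y + 0)) 1; rewrite series1 coefs0 cy expr1.
have mHs : measurable_fun setT (fun y : R => G1 (gam * Del + (y + 0)) * G2 (gam * Del + (y + 0))).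
  have mg : measurable_fun setT (fun y : R => gam * Del + (y + 0)).
    apply: measurable_funD => //; by apply: measurable_funD.
  exact: (measurableT_comp mH mg).
have mF : measurable_fun setT (fun y : R => f1 y * f2 y) by exact: measurable_funM.
have bF y : `|f1 y * f2 y| <= M1 * M2 by exact: nmul.
have mF2 : measurable_fun setT (fun y : R => e ^+ 2 * (f1 y * f2 y)).
  exact: (measurable_funM (measurable_cst _) mF).
have bF2 y : `|e ^+ 2 * (f1 y * f2 y)| <= e ^+ 2 * (M1 * M2).
  by apply: nmul => //; rewrite ger0_norm// exprn_ge0// expR_ge0.
have hK : `|\int[nu]_y (G1 (gam * Del + (y + 0)) * G2 (gam * Del + (y + 0))) - e ^+ 2 * I12|
   <= ((e * (M1 * x * e)) * (e * (M2 * e)) + (e * M1) * (e * (M2 * x * e))) * lam.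
  have iH := @int_bd _ _ _ Hnu _ _ mHs (fun y => bH _).
  have iF := @int_bd _ _ _ Hnu _ _ mF bF.
  have iF2 := @int_bd _ _ _ Hnu _ _ mF2 bF2.
  rewrite /I12 -RintegralZl// -RintegralB//.
  apply: (@Rint_bd _ _ _ Hnu); first exact: measurable_funB.
  move=> y; rewrite (_ : e ^+ 2 * (f1 y * f2 y) = (e * f1 y) * (e * f2 y)); last by ring.
  apply: prod_err.
  - exact: hGy1.
  - by apply: G0; exact: bG2.
  - by apply: nmul => //; rewrite ger0_norm// expR_ge0.
  - exact: hGy2.
have hJ1 : `|J1| <= M1 * lam by exact: (@Rint_bd _ _ _ Hnu _ _ mf1 hM1).
have hJ2 : `|J2| <= M2 * lam by exact: (@Rint_bd _ _ _ Hnu _ _ mf2 hM2).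
have hI : `|I12| <= M1 * M2 * lam by exact: (@Rint_bd _ _ _ Hnu _ _ mF bF).
have eJ1 : fconv f1 (convpow_bar nu 1) 0 = J1.
  by apply: eq_Rintegral => y _ /=; rewrite addr0 sub0r opprK.
have eJ2 : fconv f2 (convpow_bar nu 1) 0 = J2.
  by apply: eq_Rintegral => y _ /=; rewrite addr0 sub0r opprK.
have eL : LHS = e^-1 * rseries b by rewrite /LHS /P_int expRN.
have main : `|LHS - (f1 0 * f2 0 + Del * (I12 - f1 0 * J2 - f2 0 * J1 + lam * f1 0 * f2 0))|
    <= Pol (expR 1) * M1 * M2 * (lam * Del) ^+ 2.
  rewrite eL.
  apply: le_trans.
    apply: (@final_alg R e x lam Del M1 M2 _ _ _ _ _ _ _ _ _ M10 M20 (erefl x) l0 D0 hx e1 he1 he2 (hM1 0) (hM2 0) hJ1 hJ2 hI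
      hGc1 hGc2 hGc2b hK hS).
  apply: ler_wpM2r; first exact: exprn_ge0.
  apply: ler_wpM2r => //; apply: ler_wpM2r => //.
  by apply: Pol_mono => //; exact: expR_ge0.
split.
  by rewrite eJ1 eJ2.
move=> h1 h2.
have -> : lam * Del * (lam^-1 * \int[nu]_x (f1 x * f2 x)) =
   f1 0 * f2 0 + Del * (I12 - f1 0 * J2 - f2 0 * J1 + lam * f1 0 * f2 0).
  rewrite h1 h2 /I12; field; exact: lt0r_neq0.
exact: main.
Qed.
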